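(* Every rank-one transformation given by a cutting and stacking construction with a bounded number of cuts ($\sup_n r_n<\infty$) is boundedly rationally ergodic (with $F=I$, the level of $C_0$).
   Context: Rank-one transformation by cutting and stacking: $C_0$ is a single level $I$ of positive finite measure; column $C_n$ is cut into $r_n\ge2$ equal-width subcolumns, spacers are placed above subcolumns, and subcolumns are stacked left to right to form $C_{n+1}$; $T$ maps each level to the one above. For $F$ of positive finite measure, $u_k(F)=\mu(F\cap T^kF)/\mu(F)^2$, $a_n(F)=\sum_{k=0}^{n-1}u_k(F)$, $S_n(f)=\sum_{k=0}^{n-1}f\circ T^k$. $T$ is boundedly rationally ergodic if there is $F$ of positive finite measure with $\mu(X\setminus\bigcup_{i\ge0}T^iF)=0$ and $\sup_{n\ge1}\bigl\|\frac{1}{a_n(F)}S_n(1_F)\bigr\|_\infty<\infty$. *)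

(* Defs.v *)
From HB Require Import structures.
From mathcomp Require Import all_boot all_order all_algebra.
From mathcomp Require Import all_classical all_reals all_analysis.
Set Implicit Arguments. Unset Strict Implicit. Unset Printing Implicit Defensive.
Import Order.TTheory GRing.Theory Num.Theory.
Local Open Scope classical_set_scope.
Local Open Scope ring_scope.

Section BRE.
Context {d : measure_display} {X0 : measurableType d} {R : realType}.
Variables (mu : {measure set X0 -> \bar R}) (X : set X0) (T : X0 -> X0).

Definition u_k (F : set X0) (k : nat) : R :=
  fine (mu (F `&` ((iter k T) @` F))) / (fine (mu F)) ^+ 2.

Definition a_n (F : set X0) (n : nat) : R := \sum_(k < n) u_k F k.

Definition S_n (F : set X0) (n : nat) (x : X0) : R :=
  \sum_(k < n) \1_F (iter k T x).

Definition BRE_with (F : set X0) : Prop :=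
  [/\ measurable F /\ F `<=` X, (0 < mu F)%E, (mu F < +oo)%E,
      mu (X `\` \bigcup_i ((iter i T) @` F)) = 0%E &
      exists C : R, forall n : nat, (1 <= n)%N ->
        {ae mu, forall x, X x -> `| S_n F n x / a_n F n | <= C}].

Definition boundedly_rationally_ergodic : Prop := exists F, BRE_with F.
End BRE.

(* Concrete model of a rank-one cutting-and-stacking transformation    *)
(* on the real line with Lebesgue measure.                             *)
(*   l      : measure (length) of the initial level I = [0, l[          *)
(*   r n    : number of subcolumns C_n is cut into                     *)
(*   s n j  : number of spacers placed above subcolumn j (j < r n)      *)
(* Column C_n is encoded as the seq of left endpoints of its levels,    *)
(* bottom to top; all levels of C_n have width w n.  The spacers added  *)
(* at stage n are fresh intervals of width w (n+1) placed side by side  *)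
(* in [M n, M (n+1)[ where M n = (height of C_n) * w n = mu(C_n).      *)
Section RankOne.
Variables (R : realType) (l : R) (r : nat -> nat) (s : nat -> nat -> nat).

Definition rk1_width (n : nat) : R := l / (\prod_(m < n) r m)%:R.

Definition rk1_spc_before (n j : nat) : nat := \sum_(j' < j) s n j'.

Fixpoint rk1_col (n : nat) : seq R :=
  match n with
  | 0 => [:: 0]
  | m.+1 =>
      let c := rk1_col m in
      let w' := rk1_width m.+1 in
      let M := (size c)%:R * rk1_width m in
      flatten [seq [seq p + j%:R * w' | p <- c] ++
                   [seq M + (rk1_spc_before m j + k)%:R * w' | k <- iota 0 (s m j)]
              | j <- iota 0 (r m)]
  end.

Definition rk1_height (n : nat) : nat := size (rk1_col n).

Definition rk1_level (n i : nat) : set R :=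
  `[nth 0 (rk1_col n) i, nth 0 (rk1_col n) i + rk1_width n[%classic.

Definition rk1_space : set R :=
  [set x | exists n i, (i < rk1_height n)%N /\ rk1_level n i x].

(* T maps each (non-top) level of C_n onto the level above it by translation;
   it is the identity on the remaining (null) set. *)
Definition rk1_cond (x : R) (p : nat * nat) : Prop :=
  (p.2.+1 < rk1_height p.1)%N /\ rk1_level p.1 p.2 x.

Definition rk1_T (x : R) : R :=
  let p := xget (0%N, 0%N) (rk1_cond x) in
  if `[< rk1_cond x p >]
  then x - nth 0 (rk1_col p.1) p.2 + nth 0 (rk1_col p.1) p.2.+1
  else x.
End RankOne.

(* Main.v *)
Require Import Defs.
From HB Require Import structures.
From mathcomp Require Import all_boot all_order all_algebra.
From mathcomp Require Import all_classical all_reals all_analysis.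
Import Order.TTheory GRing.Theory Num.Theory.
From HB Require Import structures.
From mathcomp Require Import all_boot all_order all_algebra.
From mathcomp Require Import all_classical all_reals all_analysis.
From mathcomp Require Import zify ring lra.
Import Order.TTheory GRing.Theory Num.Theory.

Lemma sizeflat T (f : nat -> seq T) n :
  size (flatten [seq f j | j <- iota 0 n]) = (\sum_(j < n) size (f j))%N.
Proof.
elim: n => [|n IH]; first by rewrite big_ord0.
have -> : iota 0 n.+1 = iota 0 n ++ [:: n] by rewrite -addn1 iotaD.
by rewrite map_cat flatten_cat size_cat IH big_ord_recr /= cats0.
Qed.

Lemma flat_nth T (x0 : T) (f : nat -> seq T) n j t : (j < n)%N -> (t < size (f j))%N ->
  nth x0 (flatten [seq f j | j <- iota 0 n]) ((\sum_(j' < j) size (f j')) + t)%N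
  = nth x0 (f j) t.
Proof.
move=> jn tf.
have -> : n = (j + (n - j).-1.+1)%N by lia.
rewrite iotaD map_cat flatten_cat nth_cat sizeflat ltnNge leq_addr /= addKn.
by rewrite add0n /= nth_cat tf.
Qed.

Lemma flat_decomp T (f : nat -> seq T) n i :
  (i < \sum_(j < n) size (f j))%N ->
  exists j t, [/\ (j < n)%N, (t < size (f j))%N & i = (\sum_(j' < j) size (f j')) + t]%N.
Proof.
elim: n => [|n IH]; first by rewrite big_ord0.
rewrite big_ord_recr /= => hi.
case: (ltnP i (\sum_(j < n) size (f j))) => h.
  by have [j [t [h1 h2 h3]]] := IH h; exists j, t; split => //; lia.
exists n, (i - \sum_(j < n) size (f j))%N; split => //.
  by rewrite ltn_subLR.
by rewrite subnKC.
Qed.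

Section Comb.
Variables (r : nat -> nat) (s : nat -> nat -> nat).
Hypothesis hr : forall n, (2 <= r n)%N.

Definition sb m j := rk1_spc_before s m j.

Lemma sbS m j : sb m j.+1 = (sb m j + s m j)%N.
Proof. by rewrite /sb /rk1_spc_before big_ord_recr. Qed.

Lemma sb_le m j1 j2 : (j1 <= j2)%N -> (sb m j1 <= sb m j2)%N.
Proof.
move=> h; rewrite -(subnKC h); elim: (j2 - j1)%N => [|k IH]; first by rewrite addn0.
rewrite addnS sbS; lia.
Qed.

Lemma sb_lt m j1 j2 : (j1 < j2)%N -> (sb m j1 + s m j1 <= sb m j2)%N.
Proof. by move=> h; rewrite -sbS; apply: sb_le. Qed.

Fixpoint P n : seq nat :=
  match n with
  | 0 => [:: 0%N]
  | m.+1 => flatten [seq [seq p * r m + j | p <- P m] ++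
              [seq size (P m) * r m + (sb m j + k) | k <- iota 0 (s m j)]
              | j <- iota 0 (r m)]
  end%N.

Definition H n := size (P n).
Definition pp n i := nth 0%N (P n) i.
Definition blk m j := ([seq p * r m + j | p <- P m] ++
              [seq H m * r m + (sb m j + k) | k <- iota 0 (s m j)])%N.
Definition o m j := (j * H m + sb m j)%N.

Lemma PS m : P m.+1 = flatten [seq blk m j | j <- iota 0 (r m)].
Proof. by []. Qed.

Lemma size_blk m j : size (blk m j) = (H m + s m j)%N.
Proof. by rewrite /blk size_cat !size_map size_iota. Qed.

Lemma oE m j : (\sum_(j' < j) size (blk m j'))%N = o m j.
Proof.
rewrite /o; elim: j => [|j IH]; first by rewrite big_ord0 /sb /rk1_spc_before big_ord0.
by rewrite big_ord_recr /= IH size_blk sbS; lia.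
Qed.

Lemma H_S m : H m.+1 = o m (r m).
Proof. by rewrite /H PS sizeflat -oE; apply: eq_bigr => j _; rewrite size_blk. Qed.

Lemma p_copy m j t : (j < r m)%N -> (t < H m)%N -> pp m.+1 (o m j + t) = (pp m t * r m + j)%N.
Proof.
move=> jr tH; rewrite /pp PS -oE flat_nth //; last by rewrite size_blk; lia.
by rewrite /blk nth_cat size_map tH (nth_map 0%N).
Qed.

Lemma p_spc m j k : (j < r m)%N -> (k < s m j)%N ->
  pp m.+1 (o m j + (H m + k)) = (H m * r m + (sb m j + k))%N.
Proof.
move=> jr ks; rewrite /pp PS -oE flat_nth //; last by rewrite size_blk; lia.
rewrite /blk nth_cat size_map ltnNge leq_addr /= addKn (nth_map 0%N); last by rewrite size_iota.
by rewrite nth_iota.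
Qed.

Lemma decomp m i : (i < H m.+1)%N ->
  exists j t, [/\ (j < r m)%N, (t < H m + s m j)%N & i = o m j + t]%N.
Proof.
rewrite /H PS sizeflat => /flat_decomp [j [t [h1 h2 h3]]].
by exists j, t; rewrite -oE -size_blk.
Qed.

Lemma o_le m j1 j2 : (j1 <= j2)%N -> (o m j1 <= o m j2)%N.
Proof. move=> h; rewrite /o; have := @sb_le m _ _ h; nia. Qed.

Lemma o_S m j : o m j.+1 = (o m j + (H m + s m j))%N.
Proof. by rewrite /o sbS; lia. Qed.

Lemma H_pos n : (0 < H n)%N.
Proof.
elim: n => [//|n IH]; rewrite H_S /o; have := hr n; nia.
Qed.

Lemma H_ge m : (r m * H m <= H m.+1)%N.
Proof. by rewrite H_S /o; lia. Qed.

End Comb.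
Lemma divmod_eq (a b c d k : nat) : (b < k)%N -> (d < k)%N -> (a * k + b = c * k + d)%N -> a = c /\ b = d.
Proof. move=> *; have : a = c by nia. lia. Qed.

Section Comb2.
Variables (r : nat -> nat) (s : nat -> nat -> nat).
Hypothesis hr : forall n, (2 <= r n)%N.
Local Notation H := (H r s).
Local Notation pp := (pp r s).
Local Notation o := (o r s).
Local Notation sb := (sb s).

Lemma pcase m i : (i < H m.+1)%N -> exists j t, (j < r m)%N /\
  ((t < H m /\ i = o m j + t /\ pp m.+1 i = pp m t * r m + j) \/
   (t < s m j /\ i = o m j + (H m + t) /\ pp m.+1 i = H m * r m + (sb m j + t)))%N.
Proof.
move=> /decomp [j [t [jr tl ->]]]; exists j.
case: (ltnP t (H m)) => ht.
  by exists t; split => //; left; rewrite p_copy.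
have [k ek] : exists k, t = (H m + k)%N by exists (t - H m)%N; lia.
subst t; exists k; split => //; right; rewrite p_spc //; lia.
Qed.

Lemma P_prop n : (forall i, i < H n -> pp n i < H n)%N /\
  (forall i i', i < H n -> i' < H n -> pp n i = pp n i' -> i = i')%N.
Proof.
elim: n => [|m [IH1 IH2]].
  by split => [i|i i']; rewrite /H /= ?ltnS ?leqn0 => /eqP-> // /eqP->.
have HS := H_S r s m; have Hg := H_ge r s m; have rm := hr m.
have sbr : forall j, (j < r m)%N -> (sb m j + s m j <= sb m (r m))%N.
  by move=> j jr; rewrite -sbS; apply: sb_le.
split.
  move=> i /pcase [j [t [jr [[tl [-> ->]]|[tl [-> ->]]]]]].
    have := IH1 _ tl; rewrite /o in HS *; nia.
  have := sbr _ jr; rewrite /o in HS *; nia.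
move=> i i' /pcase [j [t [jr [[tl [-> ->]]|[tl [-> ->]]]]]]
               /pcase [j' [t' [jr' [[tl' [-> ->]]|[tl' [-> ->]]]]]].
- move=> /divmod_eq [] // e ->. by rewrite (IH2 _ _ tl tl' e).
- have := IH1 _ tl; nia.
- have := IH1 _ tl'; nia.
- move=> e; have e2 : (sb m j + t = sb m j' + t')%N by lia.
  case: (ltngtP j j') => hj.
  + have := @sb_lt s m _ _ hj; lia.
  + have := @sb_lt s m _ _ hj; lia.
  + by subst; have -> : t = t' by lia.
Qed.

End Comb2.
Section Comb3.
Variables (r : nat -> nat) (s : nat -> nat -> nat).
Hypothesis hr : forall n, (2 <= r n)%N.
Local Notation H := (H r s).
Local Notation pp := (pp r s).
Local Notation o := (o r s).
Local Notation sb := (sb s).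
Local Notation P := (P r s).

Lemma P_perm n : perm_eq (P n) (iota 0 (H n)).
Proof.
have [h1 h2] := @P_prop r s hr n.
have u : uniq (P n) by apply/(uniqP 0%N) => i i'; rewrite !inE; exact: h2.
apply: uniq_perm => //; first exact: iota_uniq.
have sub : {subset P n <= iota 0 (H n)}.
  by move=> x /(nthP 0%N) [i hi <-]; rewrite mem_iota add0n; exact: h1.
have sz : (size (iota 0 (H n)) <= size (P n))%N by rewrite size_iota.
by have [_ e] := uniq_min_size u sub sz.
Qed.

Lemma P_surj n v : (v < H n)%N -> exists2 i, (i < H n)%N & pp n i = v.
Proof.
move=> hv; have : v \in P n by rewrite (perm_mem (P_perm n)) mem_iota.
by move=> /(nthP 0%N) [i hi e]; exists i.
Qed.

Lemma pp0 n : pp n 0 = 0%N.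
Proof.
elim: n => [//|m IH]; have := @p_copy r s m 0 0.
rewrite /o mul0n /sb /rk1_spc_before big_ord0 IH => ->//; first by have := hr m; lia.
exact: H_pos.
Qed.

Definition Rn n := (\prod_(m < n) r m)%N.

Lemma RnS n : Rn n.+1 = (Rn n * r n)%N.
Proof. by rewrite /Rn big_ord_recr. Qed.

Lemma Rn_pos n : (0 < Rn n)%N.
Proof. elim: n => [|n IH]; first by rewrite /Rn big_ord0. rewrite RnS; have := hr n; nia. Qed.

Lemma Rn_ge n : (n < Rn n.+1)%N.
Proof. elim: n => [|n IH]; first by rewrite RnS /Rn big_ord0; have := hr 0; lia.
rewrite RnS; have := hr n.+1; nia. Qed.

Lemma R_le_H n : (Rn n <= H n)%N.
Proof.
elim: n => [|n IH]; first by rewrite /Rn big_ord0.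
rewrite RnS; have := H_ge r s n; nia.
Qed.

Lemma countI n : count (fun i => pp n i < Rn n)%N (iota 0 (H n)) = Rn n.
Proof.
rewrite -(count_map (pp n) (fun v => v < Rn n)%N).
have -> : map (pp n) (iota 0 (H n)) = P n by apply: (mkseq_nth 0%N).
rewrite (permP (P_perm n)).
have := R_le_H n => h; rewrite -(subnKC h) iotaD count_cat.
rewrite (eq_in_count (a2 := predT)); last by move=> x; rewrite mem_iota.
rewrite count_predT size_iota (eq_in_count (a2 := pred0)) ?count_pred0 ?addn0 //.
by move=> x; rewrite mem_iota /=; lia.
Qed.

End Comb3.
Section Comb4.
Variables (r : nat -> nat) (s : nat -> nat -> nat).
Hypothesis hr : forall n, (2 <= r n)%N.
Local Notation H := (H r s).
Local Notation pp := (pp r s).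
Local Notation o := (o r s).
Local Notation sb := (sb s).

Definition Rq q N := (\prod_(q <= m < N) r m)%N.

Lemma RqS q N : (q <= N)%N -> Rq q N.+1 = (r N * Rq q N)%N.
Proof. by move=> h; rewrite /Rq big_nat_recr //= mulnC. Qed.

Lemma Rq0 q : Rq q q = 1%N.
Proof. by rewrite /Rq big_geq. Qed.

Lemma Rq_pos q N : (0 < Rq q N)%N.
Proof. by rewrite /Rq; elim/big_ind: _ => // [x y|m _]; [lia|have := hr m; lia]. Qed.

Definition anc q N i := (pp N i %/ Rq q N)%N.

Lemma H_ge_R q N : (q <= N)%N -> (H q * Rq q N <= H N)%N.
Proof.
move=> h; rewrite -(subnKC h); elim: (N - q)%N => [|k IH]; first by rewrite addn0 Rq0 muln1.
rewrite addnS RqS ?leq_addr //; have := H_ge r s (q + k); nia.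
Qed.

Lemma anc_copy q N j t : (q <= N)%N -> (j < r N)%N -> (t < H N)%N ->
  anc q N.+1 (o N j + t) = anc q N t.
Proof.
move=> qN jr tH; rewrite /anc RqS // p_copy // divnMA divnMDl; last by have := hr N; lia.
by rewrite (divn_small jr) addn0.
Qed.

Lemma anc_spc q N j k : (q <= N)%N -> (j < r N)%N -> (k < s N j)%N ->
  (H q <= anc q N.+1 (o N j + (H N + k)))%N.
Proof.
move=> qN jr ks; rewrite /anc RqS // p_spc // divnMA leq_divRL ?Rq_pos //.
have := @H_ge_R q N qN; have := hr N; rewrite leq_divRL; last by have := hr N; lia.
nia.
Qed.

Lemma anc0 q N : anc q N 0 = 0%N.
Proof. by rewrite /anc pp0 // div0n. Qed.

Lemma anc_pred q k i a : (i.+1 < H (q + k))%N -> (0 < a < H q)%N ->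
  anc q (q + k) i.+1 = pp q a -> anc q (q + k) i = pp q a.-1.
Proof.
have [h1 inj] := @P_prop r s hr q.
elim: k i => [|k IH] i.
  rewrite addn0 /anc Rq0 !divn1 => hi ha e.
  have ea : i.+1 = a by apply: inj => //; lia.
  by rewrite -ea.
rewrite addnS => hi ha.
have [j [t [jr [[tl [ei _]]|[tl [ei _]]]]]] := @pcase r s _ _ hi.
- case: t tl ei => [|t] tl ei.
    rewrite ei anc_copy ?leq_addr ?H_pos // anc0 => e.
    have := inj 0%N a (@H_pos r s hr q) ltac:(lia); rewrite (@pp0 r s hr) => /(_ e); lia.
  rewrite ei; have -> : i = (o (q+k) j + t)%N by lia.
  rewrite !anc_copy ?leq_addr //; try lia. by apply: IH => //; lia.
- rewrite ei => e; have := @anc_spc q (q + k) j t (leq_addr _ _) jr tl.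
  have : (pp q a < H q)%N by apply: h1; lia.
  rewrite e; lia.
Qed.

End Comb4.
Lemma seg_count (A : pred nat) (g : nat -> nat) h ks : uniq ks ->
  (forall v, A v -> v < h)%N ->
  {in [pred k | (k \in ks) && A (g k)] &, injective g} ->
  (count (fun k => A (g k)) ks <= count A (iota 0 h))%N.
Proof.
move=> uks hA inj; rewrite -!size_filter -(size_map g).
apply: uniq_leq_size.
  rewrite map_inj_in_uniq ?filter_uniq // => x y.
  by rewrite !mem_filter => /andP[a b] /andP[c d]; apply: inj; rewrite inE ?a ?b ?c ?d.
move=> x /mapP [k]; rewrite mem_filter => /andP [ak kk] ->.
by rewrite mem_filter ak mem_iota add0n hA.
Qed.

Lemma visits (h : nat) (A : pred nat) (g : nat -> nat) n :
  (forall k, (g k).+1 < h -> g k.+1 = (g k).+1)%N ->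
  (forall k, g k.+1 < h -> g k.+1 = 0 \/ g k.+1 = (g k).+1)%N ->
  (forall v, A v -> v < h)%N -> (n <= h)%N ->
  (count (fun k => A (g k)) (iota 0 n) <= 2 * count A (iota 0 h))%N.
Proof.
move=> hi hii hA nh.
pose a := fun k => (0 < k)%N && (g k == 0%N).
pose t := find a (iota 0 n).
have tn : (t <= n)%N by rewrite -(size_iota 0 n) find_size.
have seg1 : forall k, (k < t)%N -> (g k < h)%N -> g k = (g 0 + k)%N.
  elim=> [|k IH] kt gk; first by rewrite addn0.
  have := @before_find _ 0%N a (iota 0 n) k.+1 kt.
  rewrite nth_iota; last by lia.
  rewrite /a add0n /= => /negbT g0.
  have [e|e] := hii k gk; first by rewrite e in g0.
  rewrite e IH; [lia|lia|lia].
have seg2 : (t < n)%N -> forall k, (t + k < n)%N -> g (t + k) = k.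
  move=> tn' k; elim: k => [|k IH] tk.
    rewrite addn0; have : has a (iota 0 n) by rewrite has_find size_iota.
    move=> /(nth_find 0%N); rewrite -/t nth_iota // /a => /andP [_ /eqP] //.
  rewrite addnS hi IH //; lia.
rewrite -(subnKC tn) iotaD count_cat mul2n -addnn leq_add //.
  apply: seg_count; [exact: iota_uniq|exact: hA|].
  move=> k1 k2; rewrite !inE !mem_iota !add0n => /andP [k1t a1] /andP [k2t a2] e.
  have := seg1 _ k1t (hA _ a1); have := seg1 _ k2t (hA _ a2); lia.
apply: seg_count; [exact: iota_uniq|exact: hA|].
move=> k1 k2; rewrite !inE !mem_iota => /andP [k1t _] /andP [k2t _] e.
have tn' : (t < n)%N by lia.
have := seg2 tn' (k1 - t)%N; have := seg2 tn' (k2 - t)%N.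
rewrite !subnKC; lia.
Qed.
Lemma inner_rev (g : nat -> nat) h a : (a < h)%N ->
  (\sum_(0 <= k < h) (k <= a) * g (a - k) = \sum_(0 <= b < h) (b <= a) * g b)%N.
Proof.
move=> ah.
rewrite !(@big_cat_nat _ _ _ a.+1 0 h) //=.
have z : forall F : nat -> nat, (\sum_(a.+1 <= k < h) (k <= a) * F k = 0)%N.
  by move=> F; rewrite big_nat_cond big1 // => k /andP [/andP [ak _] _]; rewrite leqNgt ak.
rewrite !z !addn0 big_nat_rev /=.
apply: eq_big_nat => k /andP [_ ka]; rewrite add0n.
have -> : (a.+1 - k.+1 = a - k)%N by lia.
have -> : (a - (a - k) = k)%N by lia.
by rewrite leq_subr (ltnSE ka).
Qed.

Lemma pairs (f : nat -> nat) h :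
  ((\sum_(0 <= a < h) f a) ^ 2 <=
   2 * \sum_(0 <= k < h) \sum_(0 <= a < h) (k <= a) * f a * f (a - k))%N.
Proof.
rewrite exchange_big_nat /=.
have -> : (\sum_(0 <= a < h) \sum_(0 <= k < h) (k <= a) * f a * f (a - k) =
           \sum_(0 <= a < h) \sum_(0 <= b < h) (b <= a) * f a * f b)%N.
  apply: eq_big_nat => a /andP [_ ah].
  rewrite (eq_bigr (fun k => f a * ((k <= a) * f (a - k))))%N; last by move=> k _; lia.
  rewrite -big_distrr /= inner_rev // big_distrr /=; apply: eq_big_nat => b _; lia.
set T := (\sum_(0 <= a < h) \sum_(0 <= b < h) (b <= a) * f a * f b)%N.
have eT : T = (\sum_(0 <= a < h) \sum_(0 <= b < h) (a <= b) * f a * f b)%N.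
  rewrite /T exchange_big_nat /=; apply: eq_bigr => a _; apply: eq_bigr => b _; lia.
rewrite mul2n -addnn {2}eT -big_split /= expnS expn1 big_distrl /=.
apply: leq_sum => a _; rewrite -big_split /= big_distrr /=; apply: leq_sum => b _.
case: (leqP a b) => ab.
  have : (0 <= (b <= a))%N by []; nia.
rewrite (ltnW ab); nia.
Qed.
Set Implicit Arguments. Unset Strict Implicit.
Local Open Scope classical_set_scope.
Local Open Scope ring_scope.

Section Real.
Variables (R : realType) (l : R) (r : nat -> nat) (s : nat -> nat -> nat).
Hypothesis hl : 0 < l.
Hypothesis hr : forall n, (2 <= r n)%N.

Local Notation H := (H r s).
Local Notation pp := (pp r s).
Local Notation o := (o r s).
Local Notation sb := (sb s).
Local Notation P := (P r s).
Local Notation Rn := (Rn r).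
Local Notation w := (rk1_width l r).
Local Notation c n i := (nth 0 (rk1_col l r s n) i).
Local Notation lvl := (rk1_level l r s).
Local Notation T := (rk1_T l r s).

Lemma wE n : w n = l / (Rn n)%:R.
Proof. by []. Qed.

Lemma w_pos n : 0 < w n.
Proof. by rewrite wE divr_gt0 // ltr0n Rn_pos. Qed.

Lemma wS n : w n = (r n)%:R * w n.+1.
Proof.
have h1 : (Rn n)%:R != 0 :> R by rewrite pnatr_eq0; have := @Rn_pos r hr n; lia.
have h2 : (r n)%:R != 0 :> R by rewrite pnatr_eq0; have := hr n; lia.
rewrite !wE RnS natrM; field; by rewrite h1 h2.
Qed.

Lemma wR n : w n * (Rn n)%:R = l.
Proof. by rewrite wE -mulrA mulVf ?mulr1 // pnatr_eq0; have := @Rn_pos r hr n; lia. Qed.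

Lemma col_eq n : rk1_col l r s n = map (fun p => p%:R * w n) (P n).
Proof.
elim: n => [|m IH]; first by rewrite /= mul0r.
rewrite /= IH map_flatten -map_comp; congr flatten; apply: eq_map => j /=.
rewrite map_cat -!map_comp size_map; congr cat; apply: eq_map => p /=.
  by rewrite natrD natrM wS; ring.
by rewrite !natrD natrM wS /sb; ring.
Qed.

Lemma size_col n : size (rk1_col l r s n) = H n.
Proof. by rewrite col_eq size_map. Qed.

Lemma c_eq n i : c n i = (pp n i)%:R * w n.
Proof.
rewrite col_eq /pp; case: (ltnP i (size (P n))) => h; first by rewrite (nth_map 0%N).
by rewrite !nth_default ?size_map // mul0r.
Qed.

Definition pos n (x : R) := Num.Def.trunc (x / w n).

Lemma lvlE n i x : lvl n i x <-> (0 <= x /\ pos n x = pp n i).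
Proof.
rewrite /rk1_level /= in_itv /= c_eq; have wp := w_pos n.
split.
  move=> /andP [h1 h2]; have x0 : 0 <= x by apply: le_trans h1; rewrite mulr_ge0 // ltW.
  split => //; apply: truncn_def; rewrite ler_pdivlMr // ltr_pdivrMr // h1 /=.
  by rewrite -nat1r mulrDl mul1r addrC.
move=> [x0 e]; have := truncn_itv (divr_ge0 x0 (ltW wp)); rewrite -/(pos n x) e.
rewrite ler_pdivlMr // ltr_pdivrMr // => /andP [-> /=].
by rewrite -nat1r mulrDl mul1r addrC.
Qed.

Lemma pos_S n x : 0 <= x -> pos n x = (pos n.+1 x %/ r n)%N.
Proof.
move=> x0; rewrite /pos; apply: truncn_def.
have wp := w_pos n.+1; have rp : (0 < r n)%N by have := hr n; lia.
have y0 : 0 <= x / w n.+1 by rewrite divr_ge0 // ltW.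
have := truncn_itv y0; set u := Num.Def.trunc _ => /andP [h1 h2].
have -> : x / w n = (x / w n.+1) / (r n)%:R.
  have h4 : (r n)%:R != 0 :> R by rewrite pnatr_eq0; lia.
  have h3 : w n.+1 != 0 by rewrite gt_eqF.
  rewrite wS; field; by rewrite h4 h3.
have rp' : 0 < (r n)%:R :> R by rewrite ltr0n.
rewrite ler_pdivlMr // ltr_pdivrMr // -!natrM; apply/andP; split.
  by apply: le_trans h1; rewrite ler_nat leq_divM.
by apply: lt_le_trans h2 _; rewrite ler_nat ltn_ceil.
Qed.

Lemma pos_Rq q N x : (q <= N)%N -> 0 <= x -> pos q x = (pos N x %/ Rq r q N)%N.
Proof.
move=> h x0; rewrite -(subnKC h); elim: (N - q)%N => [|k IH]; first by rewrite addn0 Rq0 divn1.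
by rewrite addnS RqS ?leq_addr // divnMA -pos_S.
Qed.

Lemma lvl_uniq n i i' x : (i < H n)%N -> (i' < H n)%N -> lvl n i x -> lvl n i' x -> i = i'.
Proof.
move=> h h' /lvlE [_ e] /lvlE [_ e']; have [_ inj] := @P_prop r s hr n.
by apply: inj => //; rewrite -e -e'.
Qed.

Lemma lvl_cover n x : 0 <= x -> (pos n x < H n)%N -> exists2 a, (a < H n)%N & lvl n a x.
Proof.
move=> x0 hp; have [a ha e] := @P_surj r s hr _ _ hp; exists a => //; apply/lvlE; split => //.
Qed.

Lemma lvl_pos_lt n i x : (i < H n)%N -> lvl n i x -> (pos n x < H n)%N.
Proof. move=> h /lvlE [_ ->]; have [h1 _] := @P_prop r s hr n; exact: h1. Qed.


Lemma lvl_ge0 n i x : lvl n i x -> 0 <= x.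
Proof. by move=> /lvlE []. Qed.

Lemma lvl_step N i x : lvl N i x -> (i < H N)%N ->
  let j := (pos N.+1 x %% r N)%N in
  (j < r N)%N /\ lvl N.+1 (o N j + i) x.
Proof.
move=> hx iH j; have x0 := lvl_ge0 hx; have rp : (0 < r N)%N by have := hr N; lia.
split; first by rewrite ltn_pmod.
apply/lvlE; split => //; rewrite p_copy ?ltn_pmod //.
move: hx => /lvlE [_]; rewrite (pos_S N x0) => <-.
by rewrite /j -divn_eq.
Qed.

Lemma o_lt N j t : (j < r N)%N -> (t < H N)%N -> (o N j + t < H N.+1)%N.
Proof.
move=> jr tH; rewrite H_S; have := @o_le r s N j.+1 (r N) jr; rewrite o_S; lia.
Qed.

Lemma descend n k i x : lvl n i x -> (i.+1 < H n)%N -> exists i',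
  [/\ lvl (n + k) i' x, (i'.+1 < H (n + k))%N & c (n + k) i'.+1 - c (n + k) i' = c n i.+1 - c n i].
Proof.
move=> hx hi; elim: k => [|k [i' [h1 h2 h3]]]; first by exists i; rewrite addn0.
have [jr h4] := lvl_step h1 (ltnW h2).
set j := (pos (n + k).+1 x %% r (n + k))%N in jr h4.
exists (o (n + k) j + i'); rewrite addnS; split => //.
  by have := o_lt jr h2; rewrite addnS.
rewrite -[(o _ _ + i').+1]addnS -h3 !c_eq !p_copy //; try lia.
rewrite (wS (n + k)) !natrD !natrM; ring.
Qed.

Lemma cond_eq x N i N' i' : rk1_cond l r s x (N, i) -> rk1_cond l r s x (N', i') ->
  c N i.+1 - c N i = c N' i'.+1 - c N' i'.
Proof.
rewrite /rk1_cond /rk1_height !size_col /= => [[hi hx]] [hi' hx'].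
wlog NN : N i N' i' hi hx hi' hx' / (N <= N')%N.
  move=> W; case: (leqP N N') => h; first exact: W.
  by apply/esym/W => //; apply: ltnW.
have [i'' [h1 h2 h3]] := descend (N' - N) hx hi.
rewrite subnKC // in h1 h2 h3; rewrite -h3.
by have -> : i'' = i' by apply: (lvl_uniq (ltnW h2) (ltnW hi') h1 hx').
Qed.

Lemma T_lvl N i x : lvl N i x -> (i.+1 < H N)%N -> T x = x - c N i + c N i.+1.
Proof.
move=> hx hi; have hc : rk1_cond l r s x (N, i) by split => //; rewrite /rk1_height size_col.
rewrite /rk1_T; set p := xget _ _.
have hp : rk1_cond l r s x p by apply: xgetI hc.
rewrite asboolT //; case: p hp => N' i' hp /=.
have := cond_eq hp hc => e; rewrite -addrA -[in RHS]addrA; congr (_ + _).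
by rewrite addrC e addrC.
Qed.

Lemma T_fix x : (forall p, ~ rk1_cond l r s x p) -> T x = x.
Proof.
move=> h; rewrite /rk1_T asboolF //; exact: h.
Qed.

Lemma T_in N i x : lvl N i x -> (i.+1 < H N)%N -> lvl N i.+1 (T x).
Proof.
move=> hx hi; rewrite (T_lvl hx hi); move: hx; rewrite /rk1_level /= !in_itv /=.
by move=> /andP [h1 h2]; apply/andP; split; lra.
Qed.

Lemma iter_onto N i k y : lvl N (i + k) y -> (i + k < H N)%N ->
  exists2 x, lvl N i x & iter k T x = y.
Proof.
elim: k y => [|k IH] y; first by rewrite addn0 => hy _; exists y.
rewrite addnS => hy hk.
pose x1 := y - c N (i + k).+1 + c N (i + k).
have hx1 : lvl N (i + k) x1.
  by move: hy; rewrite /x1 /rk1_level /= !in_itv /= => /andP [h1 h2]; apply/andP; split; lra.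
have [x hx ex] := IH x1 hx1 (ltnW hk).
exists x => //; rewrite iterS ex (T_lvl hx1 hk) /x1; ring.
Qed.

Lemma Rn_geN n : (n <= Rn n)%N.
Proof. case: n => [|n]; first by []. exact: Rn_ge. Qed.

Lemma pos_itv n x : 0 <= x -> (pos n x)%:R * w n <= x < (pos n x).+1%:R * w n.
Proof.
move=> x0; have wp := w_pos n.
have := truncn_itv (divr_ge0 x0 (ltW wp)); rewrite -/(pos n x).
by rewrite ler_pdivlMr // ltr_pdivrMr.
Qed.

Lemma E_nontop x : rk1_space l r s x -> exists N i, (i.+1 < H N)%N /\ lvl N i x.
Proof.
move=> [N0 [i0 [hi0 hx0]]]; rewrite /rk1_height size_col in hi0.
have [//|hno] := pselect (exists N i, (i.+1 < H N)%N /\ lvl N i x).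
have hno' : forall N i, (i.+1 < H N)%N -> ~ lvl N i x.
  by move=> N i h1 h2; apply: hno; exists N, i.
exfalso; have x0 := lvl_ge0 hx0.
pose A := (pos N0 x).+1%:R * w N0.
have claim : forall k, exists i, [/\ i.+1 = H (N0 + k), lvl (N0 + k) i x &
    (pos (N0 + k) x).+1%:R * w (N0 + k) = A].
  elim=> [|k [i [e1 e2 e3]]].
    exists i0; rewrite addn0; split => //.
    case: (ltnP i0.+1 (H N0)) => h; first by have := hno' _ _ h hx0.
    lia.
  rewrite addnS; set N := (N0 + k)%N in e1 e2 e3 *; clearbody N.
  have [jr hl'] := lvl_step e2 ltac:(lia).
  set j := (pos N.+1 x %% r N)%N in jr hl'.
  have hu : (pos N.+1 x = pos N x * r N + j)%N by rewrite (pos_S N x0) /j -divn_eq.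
  clearbody j.
  have hlt := o_lt jr (ltac:(lia) : (i < H N)%N).
  have ntop : (H N.+1 <= (o N j + i).+1)%N.
    by case: (ltnP (o N j + i).+1 (H N.+1)) => // h; have := hno' _ _ h hl'.
  have jr1 : j.+1 = r N.
    apply/eqP; rewrite eqn_leq jr /=; apply/negP => /negP; rewrite -ltnNge => hj.
    have := @o_le r s N j.+1 (r N).-1 ltac:(lia).
    have := H_S r s N; have := @o_S r s N (r N).-1; have := @o_S r s N j.
    have := @H_pos r s hr N; have -> : (r N).-1.+1 = r N by lia.
    lia.
  exists (o N j + i); split => //; first lia.
  rewrite -e3.
  rewrite hu (wS N) -jr1 -!nat1r !(natrD, natrM) -?nat1r; ring.
have Ax : x < A.
  by case/andP: (pos_itv N0 x0).
have d0 : 0 < A - x by lra.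
pose k := (Num.Def.trunc (l / (A - x))).+1.
have [i [_ _ e3]] := claim k.
have /andP [h1 _] := pos_itv (N0 + k) x0.
have hw : w (N0 + k) < A - x.
  rewrite wE ltr_pdivrMr ?ltr0n ?Rn_pos // mulrC -ltr_pdivrMr //.
  apply: lt_le_trans (truncnS_gt _) _; rewrite -/k ler_nat.
  by apply: leq_trans (Rn_geN _); rewrite leq_addl.
have : (pos (N0 + k) x)%:R * w (N0 + k) = A - w (N0 + k).
  by rewrite -e3 -nat1r; ring.
lra.
Qed.

Definition fidx q y := if (0 <= y) && (pos q y < H q)%N then index (pos q y) (P q) else H q.

Lemma fidx_lvl q y : (fidx q y < H q)%N -> lvl q (fidx q y) y.
Proof.
rewrite /fidx; case: ifP => [/andP [y0 hp] _|]; last by rewrite ltnn.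
apply/lvlE; split => //; rewrite /pp nth_index //.
by rewrite (perm_mem (@P_perm r s hr q)) mem_iota.
Qed.

Lemma fidx_eq q a y : (a < H q)%N -> lvl q a y -> fidx q y = a.
Proof.
move=> ha hy; have y0 := lvl_ge0 hy; have hp := lvl_pos_lt ha hy.
have hf : (fidx q y < H q)%N.
  rewrite /fidx y0 hp /= /H index_mem.
  by rewrite (perm_mem (@P_perm r s hr q)) mem_iota.
exact: (lvl_uniq hf ha (fidx_lvl hf) hy).
Qed.

Lemma fidx_i q y : ((fidx q y).+1 < H q)%N -> fidx q (T y) = (fidx q y).+1.
Proof.
move=> h; have hf : (fidx q y < H q)%N by lia.
by apply: fidx_eq => //; apply: T_in => //; apply: fidx_lvl.
Qed.

Lemma fidx_ii q y : (fidx q (T y) < H q)%N ->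
  fidx q (T y) = 0%N \/ fidx q (T y) = (fidx q y).+1.
Proof.
move=> ha; set a := fidx q (T y) in ha *.
have hTy : lvl q a (T y) by apply: fidx_lvl.
case: a ha hTy => [|a] ha hTy; first by left.
right; congr S; apply/esym; apply: fidx_eq; first lia.
have [[[N i] hc]|hno] := pselect (exists p, rk1_cond l r s y p).
  move: (hc); rewrite /rk1_cond /rk1_height size_col /= => [[hi hy]].
  have hTy' := T_in hy hi.
  case: (leqP N q) => hNq.
    have [i' [h1 h2 _]] := descend (q - N) hy hi.
    rewrite subnKC // in h1 h2.
    have := lvl_uniq ha (h2) hTy (T_in h1 h2) => e.
    by rewrite -[a]/(a.+1.-1) e.
  have [k ek] : exists k, N = (q + k)%N by exists (N - q)%N; lia.
  subst N.
  have y0 := lvl_ge0 hy; have ty0 := lvl_ge0 hTy.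
  have e : anc r s q (q + k) i.+1 = pp q a.+1.
    rewrite /anc; move: hTy' => /lvlE [_ <-]; move: hTy => /lvlE [_ <-].
    by rewrite (@pos_Rq q (q + k)) // leq_addr.
  have := @anc_pred r s hr q k i a.+1 hi ltac:(lia) e; rewrite /= => e'.
  apply/lvlE; split => //; rewrite (@pos_Rq q (q + k)) ?leq_addr //.
  by move: hy => /lvlE [_ ->].
exfalso.
have : rk1_space l r s y.
  have := T_fix (fun p hp => hno (ex_intro _ p hp)) => ey.
  by exists q, a.+1; rewrite /rk1_height size_col -ey.
move=> /E_nontop [N [i [hi hy]]]; apply: hno; exists (N, i); split => //.
by rewrite /rk1_height size_col.
Qed.

Lemma w0 : w 0 = l.
Proof. by rewrite wE /Rn big_ord0 divr1. Qed.

Lemma lvl00 y : lvl 0 0 y <-> 0 <= y < l.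
Proof. by rewrite /rk1_level /= in_itv /= add0r w0. Qed.

Definition Aq q a := (a < H q)%N && (pp q a < Rn q)%N.

Lemma pos_lt_Rn q y : 0 <= y -> (pos q y < Rn q)%N = (y < l).
Proof.
move=> y0; have wp := w_pos q.
rewrite /pos truncn_lt_nat; last by rewrite divr_ge0 // ltW.
by rewrite ltr_pdivrMr // mulrC wR.
Qed.

Lemma Aq_iff q y : lvl 0 0 y <-> Aq q (fidx q y).
Proof.
split.
  move=> /lvl00 /andP [y0 yl].
  have hp : (pos q y < Rn q)%N by rewrite pos_lt_Rn.
  have hpH : (pos q y < H q)%N by apply: leq_trans hp (@R_le_H r s q).
  have [a ha hya] := lvl_cover y0 hpH.
  rewrite (fidx_eq ha hya) /Aq ha /=.
  by move: hya => /lvlE [_ <-].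
move=> /andP [hf]; have := fidx_lvl hf => /lvlE [y0 <-].
by rewrite pos_lt_Rn // => yl; apply/lvl00; rewrite y0.
Qed.

Lemma indic_Aq q y : \1_(lvl 0 0) y = (Aq q (fidx q y))%:R :> R.
Proof.
rewrite indicE; have := Aq_iff q y; case: (boolP (Aq q (fidx q y))) => h [h1 h2].
  by have -> : y \in lvl 0 0 by apply/mem_set/h2.
have : y \notin lvl 0 0 by apply/negP => /set_mem /h1.
by move=> /negbTE ->.
Qed.

Lemma sum_count (b : pred nat) n : (\sum_(k < n) (b k : nat))%N = count b (iota 0 n).
Proof.
elim: n => [|n IH]; first by rewrite big_ord0.
have -> : iota 0 n.+1 = iota 0 n ++ [:: n] by rewrite -addn1 iotaD.
by rewrite big_ord_recr /= IH count_cat /= addn0.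
Qed.

Lemma S_upper q x n : (n <= H q)%N ->
  S_n (R:=R) T (lvl 0 0) n x <= 2 * (Rn q)%:R.
Proof.
move=> nH; rewrite /S_n.
rewrite (eq_bigr (fun k : 'I_n => (Aq q (fidx q (iter k T x)) : nat)%:R)); last first.
  by move=> k _; rewrite (indic_Aq q).
rewrite -natr_sum (sum_count (fun k => Aq q (fidx q (iter k T x)))) -(natrM R 2) ler_nat.
have hc : count (Aq q) (iota 0 (H q)) = Rn q.
  rewrite -(@countI r s hr q); apply: eq_in_count => i; rewrite mem_iota /Aq => /andP [_ ->].
  by [].
rewrite -hc.
apply: (@visits (H q) (Aq q) (fun k => fidx q (iter k T x)) n) => //.
- by move=> k; exact: fidx_i.
- by move=> k; exact: fidx_ii.
- by move=> v /andP [].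
Qed.

Local Notation mu := (@lebesgue_measure R).
Local Notation I := (lvl 0 0).

Lemma lvl_meas N i : measurable (lvl N i).
Proof. exact: measurable_itv. Qed.

Lemma mu_lvl N i : mu (lvl N i) = (w N)%:E.
Proof.
rewrite /rk1_level lebesgue_measure_itv /= lte_fin ltrDl w_pos -EFinD.
by rewrite addrAC subrr add0r.
Qed.

Lemma muI : mu I = l%:E.
Proof. by rewrite mu_lvl w0. Qed.

Lemma mu_mono (A B : set R) : A `<=` B -> (mu A <= mu B)%E.
Proof. move=> AB; exact: le_outer_measure. Qed.

Definition cnt m k := count (fun a => (k <= a)%N && Aq m a && Aq m (a - k)) (iota 0 (H m)).

Lemma fine_le (x z : R) (y : \bar R) : (x%:E <= y)%E -> (y <= z%:E)%E -> x <= fine y.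
Proof. by case: y => // y; rewrite !lee_fin. Qed.

Lemma uk_lower m k : w m * (cnt m k)%:R / l ^+ 2 <= u_k mu T I k.
Proof.
rewrite /u_k; change (Measure.sort _) with (@lebesgue_measure R).
rewrite muI /=; apply: ler_pM => //.
- by rewrite mulr_ge0 // ltW // w_pos.
- by rewrite invr_ge0 exprn_ge0 // ltW.
pose Cd := fun a : 'I_(H m) => ((k <= a)%N && Aq m a && Aq m (a - k)).
apply: (@fine_le _ l).
  apply: (@le_trans _ _ (mu (\big[setU/set0]_(a < H m | Cd a) lvl m a))).
    rewrite measure_bigsetU_ord_cond //.
    - rewrite (eq_bigr (fun _ => (w m)%:E)); last by move=> a _; exact: mu_lvl.
      rewrite sumEFin lee_fin big_mkcond /=.
      rewrite (eq_bigr (fun a : 'I_(H m) => (Cd a : nat)%:R * w m)); last first.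
        by move=> a _; case: (Cd a); rewrite ?mul1r ?mul0r.
      rewrite -big_distrl /= -natr_sum mulrC.
      by rewrite (sum_count (fun a => (k <= a)%N && Aq m a && Aq m (a - k))).
    - by move=> a _; exact: lvl_meas.
    - move=> a b _ _ [y [ya yb]]; apply: val_inj => /=.
      exact: (lvl_uniq (ltn_ord a) (ltn_ord b) ya yb).
  apply: mu_mono; elim/big_ind: _ => //.
    by move=> X Y hX hY y [/hX|/hY].
  move=> a /andP [/andP [ka Aa] Aak] y hy; split.
    by apply/(Aq_iff m); rewrite (fidx_eq (ltn_ord a) hy).
  have := @iter_onto m (a - k) k y; rewrite subnK //.
  move=> /(_ hy (ltn_ord a)) [z hz ez]; exists z => //.
  have hak : (a - k < H m)%N by case/andP: Aak.
  by apply/(Aq_iff m); rewrite (fidx_eq hak hz).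
by rewrite -muI; apply: mu_mono => y [].
Qed.

Lemma uk_ge0 k : 0 <= u_k mu T I k.
Proof.
rewrite /u_k; apply: divr_ge0; last by apply: exprn_ge0; apply: fine_ge0; exact: measure_ge0.
by apply: fine_ge0; exact: measure_ge0.
Qed.

Lemma countAq m : count (Aq m) (iota 0 (H m)) = Rn m.
Proof.
rewrite -(@countI r s hr m); apply: eq_in_count => i; rewrite mem_iota /Aq => /andP [_ ->].
by [].
Qed.

Lemma sum_cnt m : (Rn m ^ 2 <= 2 * \sum_(k < H m) cnt m k)%N.
Proof.
have := pairs (fun a => (Aq m a : nat)) (H m).
have -> : (\sum_(0 <= a < H m) (Aq m a : nat))%N = Rn m.
  by rewrite big_mkord (sum_count (Aq m)) countAq.
rewrite big_mkord; congr (_ <= _ * _)%N; apply: eq_bigr => k _.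
rewrite /cnt -(sum_count (fun a => (k <= a)%N && Aq m a && Aq m (a - k))) big_mkord.
by apply: eq_bigr => a _; case: (k <= a)%N; case: (Aq m a); case: (Aq m (a - k)).
Qed.

Lemma a_lower m n : (H m <= n)%N -> (Rn m)%:R / (2 * l) <= a_n mu T I n.
Proof.
move=> hn; rewrite /a_n.
apply: (@le_trans _ _ (\sum_(k < H m) u_k mu T I k)); last first.
  rewrite (big_ord_widen _ _ hn) big_mkcond /=; apply: ler_sum => k _.
  by case: ifP => // _; exact: uk_ge0.
apply: (@le_trans _ _ (\sum_(k < H m) (w m * (cnt m k)%:R / l ^+ 2))); last first.
  by apply: ler_sum => k _; exact: uk_lower.
have -> : \sum_(k < H m) (w m * (cnt m k)%:R / l ^+ 2) =
          (w m / l ^+ 2) * (\sum_(k < H m) cnt m k)%:R.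
  rewrite natr_sum big_distrr /=; apply: eq_bigr => k _; rewrite mulrAC mulrC.
  by rewrite mulrA.
have hS := sum_cnt m.
have Rp : 0 < (Rn m)%:R :> R by rewrite ltr0n (@Rn_pos r hr m).
have hS' : (Rn m)%:R ^+ 2 <= 2 * (\sum_(k < H m) cnt m k)%:R :> R.
  by rewrite -natrX -(natrM R 2) ler_nat.
have ew : w m = l / (Rn m)%:R by [].
rewrite ew.
set S := (\sum_(k < H m) cnt m k)%:R in hS' *.
set Rr := (Rn m)%:R in Rp hS' *.
have -> : Rr / (2 * l) = (Rr ^+ 2 / 2) * (l / Rr / l ^+ 2).
  by field; rewrite gt_eqF // gt_eqF.
rewrite [X in _ <= X]mulrC; apply: ler_wpM2r.
  by apply: divr_ge0; [apply: divr_ge0; apply: ltW|apply: exprn_ge0; apply: ltW].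
by rewrite ler_pdivrMr // mulrC.
Qed.

Lemma exists_m n : (1 <= n)%N -> exists m, (H m <= n <= H m.+1)%N.
Proof.
elim: n => [//|n IH] _.
case: n IH => [|n] IH.
  exists 0%N; rewrite /H /=; have := H_ge r s 0; have := hr 0; rewrite /H /=; nia.
have [m /andP [h1 h2]] := IH erefl.
case: (ltnP n.+1 (H m.+1)) => h3; first by exists m; rewrite h3 andbT; lia.
exists m.+1; apply/andP; split; first lia.
have := H_ge r s m.+1; have := hr m.+1; have := @H_pos r s hr m.+1; nia.
Qed.

Lemma S_ge0 n x : 0 <= S_n (R:=R) T I n x.
Proof. by rewrite /S_n; apply: sumr_ge0 => k _; rewrite indicE. Qed.

Lemma main_BRE (B : nat) : (forall n, (r n <= B)%N) -> BRE_with mu (rk1_space l r s) T I.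
Proof.
move=> hB; rewrite /BRE_with; change (Measure.sort _) with (@lebesgue_measure R); split.
- split; first exact: lvl_meas.
  by move=> y hy; exists 0%N, 0%N; split => //; rewrite /rk1_height size_col.
- by rewrite muI lte_fin.
- by rewrite muI ltry.
- have -> : rk1_space l r s `\` \bigcup_i (iter i T @` I) = set0.
    apply/seteqP; split => y // [[N [i [hi hy]]] hn]; apply: hn.
    rewrite /rk1_height size_col in hi.
    have := @iter_onto N 0 i y; rewrite add0n => /(_ hy hi) [z hz ez].
    exists i => //; exists z => //.
    apply/(Aq_iff N); rewrite (fidx_eq (@H_pos r s hr N) hz) /Aq (@H_pos r s hr N) /=.
    by rewrite (@pp0 r s hr) (@Rn_pos r hr).
  exact: measure0.
exists (4 * B%:R * l) => n hn; apply: aeW => x _.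
have [m /andP [h1 h2]] := exists_m hn.
have aL := a_lower h1.
have Rp : 0 < (Rn m)%:R :> R by rewrite ltr0n (@Rn_pos r hr m).
have ap : 0 < a_n mu T I n.
  by apply: lt_le_trans aL; apply: divr_gt0 => //; rewrite mulr_gt0.
have SU := S_upper x h2.
rewrite RnS natrM in SU.
have SU' : S_n (R:=R) T I n x <= 2 * ((Rn m)%:R * B%:R).
  apply: (le_trans SU); rewrite ler_pM2l // ler_pM2l // ler_nat; exact: hB.
rewrite ger0_norm; last by apply: divr_ge0; [exact: S_ge0|exact: ltW].
rewrite ler_pdivrMr //; apply: (le_trans SU').
apply: (@le_trans _ _ (4 * B%:R * l * ((Rn m)%:R / (2 * l)))).
  rewrite le_eqVlt; apply/orP; left; apply/eqP; field.
  by rewrite gt_eqF.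
have Bp : 0 < B%:R :> R by rewrite ltr0n; have := hB 0%N; have := hr 0%N; lia.
by rewrite ler_pM2l // !mulr_gt0.
Qed.
End Real.

Theorem mainTheorem10 (R : realType) (l : R) (r : nat -> nat)
    (s : nat -> nat -> nat) :
  0 < l ->
  (forall n, (2 <= r n)%N) ->
  (exists B : nat, forall n, (r n <= B)%N) ->
  boundedly_rationally_ergodic (@lebesgue_measure R) (rk1_space l r s) (rk1_T l r s) /\
  BRE_with (@lebesgue_measure R) (rk1_space l r s) (rk1_T l r s) (rk1_level l r s 0 0).
Proof.
move=> hl hr [B hB].
have h := @main_BRE R l r s hl hr B hB.
by split => //; exists (rk1_level l r s 0 0).
Qed.
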